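(* Let $\{\triangleright\}\subseteq\sigma\subseteq\{\triangleright,\wedge,\mathrm{upd},\sqcup\}$ and let $\mathcal{A}$ be a $\sigma$-algebra that is representable by partial functions and whose atoms are separating. Then $\mathcal{A}$ is the $\sigma$-reduct of a $(\sigma\cup\{;\})$-algebra that is representable by partial functions, whose atoms are separating, and in which composition is completely left-distributive over meets.
   Context: The operations are interpreted on partial functions as: $f \triangleright g = \{(x,y) \in g : x \notin \mathrm{dom}(f)\}$; $f;g=\{(x,z):\exists y\,((x,y)\in f,(y,z)\in g)\}$; $f\wedge g = f\cap g$; $\mathrm{upd}(f,g)(x)$ is $f(x)$ if $f(x)$ defined and $g(x)$ undefined, $g(x)$ if both defined, undefined otherwise; $(f\sqcup g)(x)$ is $f(x)$ if defined, else $g(x)$. An algebra is representable by partial functions if it is isomorphic to an algebra of partial functions (on some base set) with these operations. Define $0 := a\triangleright a$, $a\lhd b := (a\triangleright b)\triangleright b$, $a \le b :\iff a\lhd b = a$. An atom is a minimal nonzero element; atoms are separating if whenever $a\not\le b$ there is an atom $c\le a$ with $c\not\le b$. Composition is completely left-distributive over meets if for every nonempty $S$ with $\bigwedge S$ existing and every $a$, $\bigwedge\{a;s:s\in S\}$ exists and equals $a;\bigwedge S$. *)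

(* Defs.v *)
(* Operation symbols: antidomain restriction (▷), meet (∧), update,
   preferential union (⊔), composition (;).  All are binary. *)
Inductive sym : Type := Rs | Meet | Upd | Join | Comp.

(* A (total) interpretation of all five symbols on a carrier T.  A
   sigma-algebra is such a record where only the symbols in sigma matter
   (the other fields are ignored by every notion below). *)
Record ops (T : Type) : Type := Ops {
  op_rs : T -> T -> T;
  op_meet : T -> T -> T;
  op_upd : T -> T -> T;
  op_join : T -> T -> T;
  op_comp : T -> T -> T }.
Arguments Ops {T}.
Arguments op_rs {T}. Arguments op_meet {T}. Arguments op_upd {T}.
Arguments op_join {T}. Arguments op_comp {T}.

Definition op {T : Type} (o : ops T) (s : sym) : T -> T -> T :=
  match s with
  | Rs => op_rs o | Meet => op_meet o | Upd => op_upd o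
  | Join => op_join o | Comp => op_comp o
  end.

(* Partial functions on X, as functional relations (graphs). *)
Definition pfun (X : Type) := X -> X -> Prop.
Definition functional {X : Type} (f : pfun X) : Prop :=
  forall x y z, f x y -> f x z -> y = z.
Definition dom {X : Type} (f : pfun X) (x : X) : Prop := exists y, f x y.

Definition interp {X : Type} (s : sym) (f g : pfun X) : pfun X :=
  match s with
  | Rs => fun x y => g x y /\ ~ dom f x
  | Meet => fun x y => f x y /\ g x y
  | Upd => fun x y => (f x y /\ ~ dom g x) \/ (g x y /\ dom f x)
  | Join => fun x y => f x y \/ (g x y /\ ~ dom f x)
  | Comp => fun x y => exists z, f x z /\ g z y
  end.

Definition representable (sigma : sym -> Prop) {T : Type} (o : ops T) : Prop :=
  exists (X : Type) (h : T -> pfun X),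
    (forall a, functional (h a)) /\
    (forall a b, (forall x y, h a x y <-> h b x y) -> a = b) /\
    (forall s, sigma s -> forall a b x y,
        h (op o s a b) x y <-> interp s (h a) (h b) x y).

Section Derived.
Context {T : Type} (rs : T -> T -> T).

Definition dres (a b : T) : T := rs (rs a b) b.
Definition le (a b : T) : Prop := dres a b = a.

Definition is_zero (a : T) : Prop := a = rs a a.

Definition atom (c : T) : Prop :=
  ~ is_zero c /\ forall d, le d c -> ~ is_zero d -> d = c.

Definition atoms_separating : Prop :=
  forall a b, ~ le a b -> exists c, atom c /\ le c a /\ ~ le c b.

Definition is_glb (S : T -> Prop) (m : T) : Prop :=
  (forall s, S s -> le m s) /\ (forall l, (forall s, S s -> le l s) -> le l m).

Definition comp_left_distr (comp : T -> T -> T) : Prop :=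
  forall S : T -> Prop, (exists s, S s) ->
  forall m, is_glb S m ->
  forall a, is_glb (fun t => exists s, S s /\ t = comp a s) (comp a m).
End Derived.

Definition with_comp {T : Type} (o : ops T) (c : T -> T -> T) : ops T :=
  Ops (op_rs o) (op_meet o) (op_upd o) (op_join o) c.

Definition add_comp (sigma : sym -> Prop) : sym -> Prop :=
  fun s => sigma s \/ s = Comp.

(* Main.v *)
Require Import Defs.
From Stdlib Require Import Setoid.

Definition lift {X : Type} (f : pfun X) : pfun (X * bool) :=
  fun p q => snd p = false /\ snd q = true /\ f (fst p) (fst q).

Lemma dom_lift {X : Type} (f : pfun X) x b :
  dom (lift f) (x, b) <-> b = false /\ dom f x.
Proof.
  unfold dom, lift; simpl; split.
  - intros [[y b'] [H1 [H2 H3]]]; simpl in *; eauto.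
  - intros [H1 [y Hy]]; exists (y, true); simpl; auto.
Qed.

Lemma interp_lift {X : Type} (s : sym) (f g : pfun X) p q :
  s <> Comp -> (lift (interp s f g) p q <-> interp s (lift f) (lift g) p q).
Proof.
  intro Hs; destruct p as [x b]; destruct q as [y b'].
  destruct s; try (exfalso; apply Hs; reflexivity); simpl;
  rewrite ?dom_lift; unfold lift; simpl;
  destruct b, b'; firstorder (try discriminate).
Qed.

Theorem lemma6p2 (sigma : sym -> Prop) (Hrs : sigma Rs) (Hnc : ~ sigma Comp)
  (T : Type) (o : ops T)
  (Hrep : representable sigma o)
  (Hsep : atoms_separating (op_rs o)) :
  exists c : T -> T -> T,
    representable (add_comp sigma) (with_comp o c) /\
    atoms_separating (op_rs (with_comp o c)) /\
    comp_left_distr (op_rs (with_comp o c)) c.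
Proof.
  destruct Hrep as [X [h [Hf [Hi Hop]]]].
  pose proof (Hop Rs Hrs) as HR; simpl in HR.
  assert (Hz : forall a x y, ~ h (op_rs o a a) x y).
  { intros a x y H. apply HR in H. simpl in H. destruct H as [H1 H2].
    apply H2; exists y; exact H1. }
  assert (Hle : forall z, le (op_rs o) z z).
  { intro z. unfold le, dres. apply Hi. intros x y.
    rewrite HR. split; [tauto|]. intro H; split; auto.
    intros [w Hw]. apply (Hz z x w Hw). }
  exists (fun a _ => op_rs o a a). split; [|split].
  - exists (X * bool)%type, (fun a => lift (h a)). split; [|split].
    + intros a [x b] [y1 b1] [y2 b2]; unfold lift; simpl.
      intros [H1 [H2 H3]] [H4 [H5 H6]]. subst. f_equal. eapply Hf; eauto.
    + intros a b H. apply Hi. intros x y.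
      specialize (H (x,false) (y,true)). unfold lift in H; simpl in H. tauto.
    + intros s Hs a b [x bx] [y bY]. destruct Hs as [Hs | Hs].
      * assert (Hc : s <> Comp) by (intro E; subst; contradiction).
        rewrite <- interp_lift by exact Hc.
        pose proof (Hop s Hs a b x y) as E.
        destruct s; try (exfalso; apply Hc; reflexivity); simpl in *;
        unfold lift; simpl; rewrite E; tauto.
      * subst s. simpl. unfold lift; simpl. split.
        -- intros [_ [_ H]]. exfalso; eapply Hz; eauto.
        -- intros [[z bz] [[_ [H1 _]] [H2 _]]]. simpl in *. congruence.
  - exact Hsep.
  - intros S [s0 Hs0] m Hm a. simpl. split.
    + intros t [s [_ ->]]. apply Hle.
    + intros l Hl. apply (Hl _ (ex_intro _ s0 (conj Hs0 eq_refl))).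
Qed.
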